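(* Let $1\le p<\infty$ and let $\mathbf u,\mathbf v$ be bounded sequences of non-zero scalars such that the weighted backward shifts $B_{\mathbf u}$ and $B_{\mathbf v}$ are frequently hypercyclic on $\ell_p(\mathbb Z_+)$. If $\frac{u_1\cdots u_n}{v_1\cdots v_n}$ has a non-zero limit as $n\to\infty$, then $B_{\mathbf u}$ and $B_{\mathbf v}$ have the same frequently hypercyclic vectors.
   Context: $B_{\mathbf w}e_0=0$, $B_{\mathbf w}e_n=w_ne_{n-1}$ on $\ell_p(\mathbb Z_+)$ (real or complex). A vector $x$ is frequently hypercyclic for an operator $T$ if for every non-empty open set $U$, the set $\{n\in\mathbb Z_+: T^nx\in U\}$ has positive lower density; $T$ is frequently hypercyclic if it has such a vector. *)

(* Defs.v *)
From HB Require Import structures.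
From mathcomp Require Import all_boot all_order all_algebra.
From mathcomp Require Import all_classical all_reals all_analysis.
From mathcomp Require Import complex.
Set Implicit Arguments. Unset Strict Implicit. Unset Printing Implicit Defensive.
Import Order.TTheory GRing.Theory Num.Theory numFieldNormedType.Exports.
Local Open Scope classical_set_scope.
Local Open Scope ring_scope.

(* Scalars: a field K (K = R or K = R[i]) with its modulus nK : K -> R.
   Sequences on Z_+ are functions nat -> K. *)
Section LpShifts.
Variables (R : realType) (K : numFieldType) (nK : K -> R) (p : R).

Definition in_lp (x : nat -> K) : Prop :=
  cvgn (series (fun n => nK (x n) `^ p)).

Definition lp_norm (x : nat -> K) : R :=
  (limn (series (fun n => nK (x n) `^ p))) `^ (p^-1).

Definition lp_open (U : set (nat -> K)) : Prop :=
  U `<=` in_lp /\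
  forall y, U y -> exists2 e : R, 0 < e &
     forall z, in_lp z -> lp_norm (fun n => z n - y n) < e -> U z.

(* weighted backward shift: B_w e_0 = 0, B_w e_n = w_n e_(n-1),
   i.e. (B_w x)_n = w_(n+1) x_(n+1); w_0 is irrelevant. *)
Definition bshift (w : nat -> K) (x : nat -> K) : nat -> K :=
  fun n => w n.+1 * x n.+1.

Definition count_below (A : set nat) (N : nat) : R :=
  (\sum_(n < N) (`[< A n >] : nat))%:R.

Definition lower_density (A : set nat) : R :=
  limn_inf (fun N : nat => count_below A N / N%:R).

Definition freq_hypercyclic_vector (T : (nat -> K) -> (nat -> K)) (x : nat -> K) : Prop :=
  in_lp x /\
  forall U, lp_open U -> U !=set0 ->
    0 < lower_density [set n | U (iter n T x)].

Definition freq_hypercyclic (T : (nat -> K) -> (nat -> K)) : Prop :=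
  exists x, freq_hypercyclic_vector T x.

Definition admissible_weight (w : nat -> K) : Prop :=
  (exists M : R, forall n, (0 < n)%N -> nK (w n) <= M) /\
  (forall n, (0 < n)%N -> w n != 0).

Definition wprod (w : nat -> K) (n : nat) : K := \prod_(1 <= i < n.+1) w i.

Definition has_nonzero_limit (a : nat -> K) : Prop :=
  exists2 L : K, L != 0 & (fun n => nK (a n - L)) @ \oo --> (0 : R).

Definition prop6p9_statement : Prop :=
  forall u v : nat -> K,
    admissible_weight u -> admissible_weight v ->
    freq_hypercyclic (bshift u) -> freq_hypercyclic (bshift v) ->
    has_nonzero_limit (fun n => wprod u n / wprod v n) ->
    forall x, freq_hypercyclic_vector (bshift u) x <-> freq_hypercyclic_vector (bshift v) x.
End LpShifts.

Definition modR (R : realType) (x : R) : R := `|x|.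
Definition Cscalars (R : realType) : numFieldType := R[i].
Definition modC (R : realType) (z : Cscalars R) : R :=
  complex.ComplexField.Normc.normc (z : R[i]).

(* Main.v *)
Require Import Defs.
From HB Require Import structures.
From mathcomp Require Import all_boot all_order all_algebra.
From mathcomp Require Import all_classical all_reals all_analysis.
From mathcomp Require Import complex ring lra zify.
Set Implicit Arguments. Unset Strict Implicit. Unset Printing Implicit Defensive.
Import Order.TTheory GRing.Theory Num.Theory numFieldNormedType.Exports.
Local Open Scope classical_set_scope.
Local Open Scope ring_scope.
Section Dens.
Variable R : realType.

Lemma liminf_le (u v : nat -> R) : bounded_fun u -> bounded_fun v ->
  (forall n, u n <= v n) -> limn_inf u <= limn_inf v.
Proof.
move=> bu bv uv.
have cu : cvgn (infs u).
  apply: nondecreasing_is_cvgn; last exact: bounded_fun_has_ubound_infs.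
  exact/nondecreasing_infs/bounded_fun_has_lbound.
have cv : cvgn (infs v).
  apply: nondecreasing_is_cvgn; last exact: bounded_fun_has_ubound_infs.
  exact/nondecreasing_infs/bounded_fun_has_lbound.
apply: ler_lim => //; apply: nearW => n.
apply: lb_le_inf; first by exists (v n); exists n => /=.
move=> M [k /= kn <-]; apply: le_trans (uv k).
apply: ge_inf; last by exists k.
exact/has_lbound_sdrop/bounded_fun_has_lbound.
Qed.

Lemma bnd01 (u : nat -> R) : (forall n, 0 <= u n <= 1) -> bounded_fun u.
Proof.
move=> h; apply/(@ex_bound nat R R^o u (globally setT)); last (exists 1; move=> n _ /=); first exact: (@globally_properfilter nat setT 0%N).
by have /andP[h0 h1] := h n; rewrite ger0_norm.
Qed.

Lemma count_le (A : set nat) N : (\sum_(n < N) (`[< A n >] : nat) <= N)%N.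
Proof.
rewrite -[X in (_ <= X)%N]card_ord -sum1_card; apply: leq_sum => i _; exact: leq_b1.
Qed.

Lemma dens01 (A : set nat) N : 0 <= count_below R A N / N%:R <= 1.
Proof.
rewrite /count_below divr_ge0 //=.
have [->|N0] := eqVneq N 0%N; first by rewrite invr0 mulr0.
rewrite ler_pdivrMr ?ltr0n ?lt0n // mul1r ler_nat; exact: count_le.
Qed.

Lemma count_shift (A B : set nat) N0 : (forall n, (N0 <= n)%N -> A n -> B n) ->
  forall N, (\sum_(0 <= n < N) (`[< A n >] : nat) <= \sum_(0 <= n < N) (`[< B n >] : nat) + minn N N0)%N.
Proof.
move=> AB; elim=> [|N IH]; first by rewrite !big_geq.
rewrite !big_nat_recr //=; move: IH.
generalize (\sum_(0 <= n < N) (`[< A n >] : nat))%N (\sum_(0 <= n < N) (`[< B n >] : nat))%N => a b IH.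
have [NN0|NN0] := leqP N0 N.
  have -> : minn N.+1 N0 = minn N N0 by lia.
  case: (asboolP (A N)) => AN /=; last by lia.
  by rewrite (asboolT (AB _ NN0 AN)) /=; lia.
have -> : minn N.+1 N0 = (minn N N0).+1 by lia.
have := leq_b1 `[< A N >]; lia.
Qed.

Lemma ld_pos (A B : set nat) N0 : (forall n, (N0 <= n)%N -> A n -> B n) ->
  0 < lower_density R A -> 0 < lower_density R B.
Proof.
move=> AB hA.
pose g := fun N : nat => - (N0%:R / N%:R : R).
have gc : g @ \oo --> (0 : R).
  rewrite -oppr0; apply: cvgN.
  rewrite -(mulr0 (N0%:R : R)); apply: cvgMl_tmp.
  rewrite -cvg_shiftS; exact: cvg_harmonic.
have bg : bounded_fun g by apply: cvg_seq_bounded; apply/cvg_ex; exists 0.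
have lg : limn_inf g = 0.
  by rewrite cvg_limn_infE ?(cvg_lim _ gc) //; apply/cvg_ex; exists 0.
apply: (lt_le_trans hA).
have := le_limn_infD (bnd01 (dens01 A)) bg; rewrite lg addr0 => h.
apply: (le_trans h); apply: liminf_le.
- apply: bounded_funD => //; exact: bnd01 (dens01 A).
- exact: bnd01 (dens01 B).
move=> N /=; rewrite /g /count_below.
rewrite -mulrBl ler_wpM2r ?invr_ge0 ?ler0n // lerBlDr -natrD ler_nat.
have := count_shift AB N; rewrite !big_mkord => hc.
apply: (leq_trans hc); rewrite leq_add2l; lia.
Qed.

End Dens.
Section Gen.
Variables (R : realType) (K : numFieldType) (nK : K -> R) (p : R).
Hypotheses (p1 : 1 <= p) (nK_ge0 : forall a, 0 <= nK a)
  (nKD : forall a b, nK (a + b) <= nK a + nK b)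
  (nKM : forall a b, nK (a * b) = nK a * nK b)
  (nK_gt0 : forall a, a != 0 -> 0 < nK a)
  (nKN : forall a, nK (- a) = nK a) (nK1 : nK 1 = 1) (nK0 : nK 0 = 0).

Local Notation inlp := (in_lp nK p).
Local Notation pw t := (t `^ p).

Definition nt (x : nat -> K) n := pw (nK (x n)).
Definition Sm (x : nat -> K) := limn (series (nt x)).
Definition dif (x y : nat -> K) := fun n => x n - y n.
Definition mulseq (c x : nat -> K) := fun n => c n * x n.

Lemma p0 : 0 < p. Proof. exact: lt_le_trans ltr01 p1. Qed.
Lemma pneq0 : p != 0. Proof. exact: lt0r_neq0 p0. Qed.

Lemma pw_mono s t : 0 <= s -> s <= t -> pw s <= pw t.
Proof.
move=> s0 st; apply: (ge0_ler_powR (ltW p0)) => //; rewrite nnegrE //.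
exact: le_trans st.
Qed.

Lemma pw_gt0 t : 0 < t -> 0 < pw t. Proof. exact: powR_gt0. Qed.

Lemma pwM s t : 0 <= s -> 0 <= t -> pw (s * t) = pw s * pw t.
Proof. exact: powRM. Qed.

Lemma pw_le1 t : 0 <= t -> t <= 1 -> pw t <= t.
Proof.
rewrite le_eqVlt => /predU1P[<- _|t0 t1]; first by rewrite powR0 ?pneq0.
by apply: ge1r_powR => //; rewrite t0 t1.
Qed.

Lemma nt_ge0 x n : 0 <= nt x n. Proof. exact: powR_ge0. Qed.

Lemma nKV a : nK (a^-1) = (nK a)^-1.
Proof.
have [->|a0] := eqVneq a 0; first by rewrite invr0 nK0 invr0.
have na : nK a != 0 by rewrite gt_eqF // nK_gt0.
by apply: (mulfI na); rewrite -nKM !divff.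
Qed.

Lemma nKB a b : nK (a - b) <= nK a + nK b.
Proof. by rewrite -(nKN b); apply: nKD. Qed.

Lemma pw_quasi a b : pw (nK (a + b)) <= pw 2 * (pw (nK a) + pw (nK b)).
Proof.
have key : forall m, nK a <= m -> nK b <= m -> pw m <= pw (nK a) + pw (nK b) ->
  pw (nK (a + b)) <= pw 2 * (pw (nK a) + pw (nK b)).
  move=> m am bm hm.
  have h : nK (a + b) <= 2 * m by apply: (le_trans (nKD a b)); lra.
  apply: (le_trans (pw_mono (nK_ge0 _) h)); rewrite pwM ?ler0n //; last first.
    exact: le_trans (nK_ge0 a) am.
  by apply: ler_wpM2l => //; exact: powR_ge0.
have [ab|ba] := leP (nK a) (nK b).
  by apply: (key (nK b)) => //; rewrite lerDr powR_ge0.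
by apply: (key (nK a)) => //; [exact: ltW|rewrite lerDl powR_ge0].
Qed.

Lemma ser_nn (f : nat -> R) : (forall n, 0 <= f n) -> cvgn (series f) ->
  forall N, series f N <= limn (series f).
Proof.
move=> f0 cf N; apply: nondecreasing_cvgn_le => //.
move=> m n mn; rewrite /series /=.
exact: (@nondecreasing_series R f xpredT 0%N (fun k _ _ => f0 k) m n mn).
Qed.

Lemma ser_bound (f : nat -> R) B : (forall n, 0 <= f n) -> (forall N, series f N <= B) ->
  cvgn (series f) /\ limn (series f) <= B.
Proof.
move=> f0 fB.
have cf : cvgn (series f).
  apply: nondecreasing_is_cvgn.
    move=> m n mn; rewrite /series /=.
    exact: (@nondecreasing_series R f xpredT 0%N (fun k _ _ => f0 k) m n mn).
  by exists B => _ [n _ <-].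
split => //; apply: limr_le => //; exact: nearW.
Qed.

Lemma Sm_ge0 x : inlp x -> 0 <= Sm x.
Proof.
move=> xl; apply: le_trans (ser_nn (@nt_ge0 x) xl 0%N).
by rewrite /series /= big_geq.
Qed.

Lemma dom x y1 y2 (a b : R) : 0 <= a -> 0 <= b -> inlp y1 -> inlp y2 ->
  (forall k, nt x k <= a * nt y1 k + b * nt y2 k) ->
  inlp x /\ Sm x <= a * Sm y1 + b * Sm y2.
Proof.
move=> a0 b0 l1 l2 h.
apply: (@ser_bound (nt x)) => [n|N]; first exact: nt_ge0.
rewrite /series /=.
apply: (le_trans (ler_sum _ (fun k _ => h k))).
rewrite big_split /= -!mulr_sumr; apply: lerD; apply: ler_wpM2l => //.
  exact: (ser_nn (@nt_ge0 y1) l1 N).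
exact: (ser_nn (@nt_ge0 y2) l2 N).
Qed.

Lemma dom1 x y (a : R) : 0 <= a -> inlp y ->
  (forall k, nt x k <= a * nt y k) -> inlp x /\ Sm x <= a * Sm y.
Proof.
move=> a0 l h; have [] := @dom x y y a 0 a0 (lexx _) l l.
  by move=> k; rewrite mul0r addr0.
by rewrite mul0r addr0.
Qed.

Lemma inlp_dif x y : inlp x -> inlp y -> inlp (dif x y).
Proof.
move=> lx ly; have [] // := @dom (dif x y) x y (pw 2) (pw 2) (powR_ge0 _ _) (powR_ge0 _ _) lx ly.
move=> k; rewrite /nt /dif -mulrDr.
by rewrite -(nKN (y k)); apply: pw_quasi.
Qed.

Lemma inlp_mul (c x : nat -> K) (M : R) : 0 <= M -> (forall k, nK (c k) <= M) ->
  inlp x -> inlp (mulseq c x) /\ Sm (mulseq c x) <= pw M * Sm x.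
Proof.
move=> M0 cM lx; apply: dom1 => //; first exact: powR_ge0.
move=> k; rewrite /nt /mulseq nKM pwM //; apply: ler_wpM2r; first exact: powR_ge0.
exact: pw_mono.
Qed.

Lemma Sm0 x : Sm (dif x x) = 0.
Proof.
rewrite /Sm.
have -> : series (nt (dif x x)) = fun=> 0.
  apply/funext => N; rewrite /series /= big1 // => k _.
  by rewrite /nt /dif subrr nK0 powR0 ?pneq0.
by rewrite lim_cst.
Qed.

Lemma lpn_lt s e : 0 <= s -> 0 < e -> (s `^ p^-1 < e) <-> (s < pw e).
Proof.
move=> s0 e0; have hs : pw (s `^ p^-1) = s.
  by rewrite -powRrM mulVf ?pneq0 // powRr1.
split => h.
  by rewrite -{1}hs; apply: gt0_ltr_powR => //; [exact: p0|rewrite nnegrE powR_ge0|rewrite nnegrE ltW].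
rewrite ltNge; apply/negP => h2; have := pw_mono (ltW e0) h2; rewrite hs => h3.
by move: h; rewrite ltNge h3.
Qed.


Lemma core (u v a : nat -> K) (L : K) (c C : R) x :
  L != 0 -> 0 < c -> (forall k, a k != 0) -> (forall k, c <= nK (a k)) ->
  (forall k, nK (a k) <= C) ->
  (forall eps, 0 < eps -> exists N, forall m, (N <= m)%N -> nK (a m - L) <= eps) ->
  (forall z k n, iter n (bshift u) z k = a (k + n)%N / a k * iter n (bshift v) z k) ->
  freq_hypercyclic_vector nK p (bshift v) x -> freq_hypercyclic_vector nK p (bshift u) x.
Proof.
move=> L0 c0 a0 ac aC hlim hrel [xl hx]; split => // U Uo [y0 Uy0].
have [Ul Uopen] := Uo; have [e e0 he] := Uopen y0 Uy0; have y0l := Ul _ Uy0.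
have nL0 : 0 < nK L by exact: nK_gt0.
have C0 : 0 < C by apply: lt_le_trans c0 (le_trans (ac 0%N) (aC 0%N)).
set E := pw e; have E0 : 0 < E by exact: pw_gt0.
set cp := pw 2; have cp0 : 0 < cp by exact: pw_gt0.
set CT := pw (nK L / c); have CT0 : 0 < CT by apply: pw_gt0; exact: divr_gt0.
set CM := pw (C / nK L); have CM0 : 0 < CM by apply: pw_gt0; exact: divr_gt0.
set Tm := mulseq (fun k => L / a k).
set Ti := mulseq (fun k => a k / L).
have Tb k : nK (L / a k) <= nK L / c.
  rewrite nKM nKV ler_wpM2l ?nK_ge0 // lef_pV2 ?posrE //; exact: lt_le_trans (ac k).
have Tib k : nK (a k / L) <= C / nK L.
  by rewrite nKM nKV ler_wpM2r ?invr_ge0 ?nK_ge0.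
have Tml z : inlp z -> inlp (Tm z).
  by move=> zl; have [] := @inlp_mul (fun k => L / a k) z _ (ltW (divr_gt0 nL0 c0)) Tb zl.
set Sy := Sm y0; have Sy0 : 0 <= Sy by exact: Sm_ge0.
set delta := E / (4 * cp * CM).
have delta0 : 0 < delta by apply: divr_gt0 => //; rewrite !mulr_gt0.
set eta := Num.min 1 (E / (4 * cp * (Sy + 1))).
have eta0 : 0 < eta.
  by rewrite lt_min ltr01 /=; apply: divr_gt0 => //; rewrite !mulr_gt0 // ltr_wpDl.
have [N0 hN0] := hlim (eta * nK L) (mulr_gt0 eta0 nL0).
have hM m : (N0 <= m)%N -> nK (a m / L - 1) <= eta.
  move=> mN; have -> : a m / L - 1 = (a m - L) * L^-1 by field.
  by rewrite nKM nKV ler_pdivrMr // hN0.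
pose V := [set w | inlp w /\ exists2 rho : R, 0 < rho &
  forall z, inlp z -> Sm (dif z (Tm w)) < rho -> Sm (dif z y0) < delta].
have Vo : lp_open nK p V.
  split; first by move=> w [].
  move=> w [wl [rho rho0 hw]].
  set r := rho / (2 * cp * CT).
  have r0 : 0 < r by apply: divr_gt0 => //; rewrite !mulr_gt0.
  exists (r `^ p^-1); first exact: powR_gt0.
  move=> z' z'l hz'.
  have dl : inlp (dif z' w) by exact: inlp_dif.
  have hz'2 : Sm (dif z' w) < r.
    have := (lpn_lt (Sm_ge0 dl) (powR_gt0 p^-1 r0)).1 hz'.
    by rewrite -powRrM mulVf ?pneq0 // powRr1 // ltW.
  split; first exact: z'l.
  exists (rho / (2 * cp)); first by rewrite divr_gt0 // mulr_gt0.
  move=> z zl hz; apply: hw => //.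
  have l1 : inlp (dif z (Tm z')) by apply: inlp_dif => //; exact: Tml.
  have l2 : inlp (dif (Tm z') (Tm w)) by apply: inlp_dif; exact: Tml.
  have [_ h1] : inlp (dif z (Tm w)) /\ Sm (dif z (Tm w)) <= cp * Sm (dif z (Tm z')) + cp * Sm (dif (Tm z') (Tm w)).
    apply: dom => //; try exact: ltW.
    move=> k; rewrite -mulrDr /nt /dif.
    have -> : z k - Tm w k = (z k - Tm z' k) + (Tm z' k - Tm w k) by rewrite addrA subrK.
    exact: pw_quasi.
  have [_ h2] := @inlp_mul (fun k => L / a k) (dif z' w) _ (ltW (divr_gt0 nL0 c0)) Tb dl.
  have e2 : mulseq (fun k => L / a k) (dif z' w) = dif (Tm z') (Tm w).
    by apply/funext => k; rewrite /mulseq /dif /Tm /mulseq mulrBr.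
  rewrite e2 in h2.
  apply: le_lt_trans h1 _.
  have h3 : cp * Sm (dif z (Tm z')) < rho / 2.
    have -> : rho / 2 = cp * (rho / (2 * cp)) by field; rewrite gt_eqF.
    by rewrite ltr_pM2l.
  have h4 : cp * Sm (dif (Tm z') (Tm w)) < rho / 2.
    apply: le_lt_trans (ler_wpM2l (ltW cp0) h2) _.
    have -> : rho / 2 = cp * (CT * r) by rewrite /r; field; rewrite !gt_eqF.
    by rewrite ltr_pM2l // ltr_pM2l.
  lra.
have V0 : V !=set0.
  exists (Ti y0); split.
    by have [] := @inlp_mul (fun k => a k / L) y0 _ (ltW (divr_gt0 C0 nL0)) Tib y0l.
  exists delta => // z zl hz.
  have e1 : dif z (Tm (Ti y0)) = dif z y0.
    apply/funext => k; rewrite /dif /Tm /Ti /mulseq; congr (_ - _).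
    by field; rewrite L0 a0.
  by rewrite e1 in hz.
have hA := hx V Vo V0.
apply: (ld_pos _ hA) => n nN0 [wl [rho rho0 hw]].
set w := iter n (bshift v) x in wl hw.
have Sd : Sm (dif (Tm w) y0) < delta by apply: hw; [exact: Tml|rewrite Sm0].
have eB : iter n (bshift u) x = mulseq (fun k => a (k + n)%N / a k) w.
  by apply/funext => k; rewrite hrel.
have Bl : inlp (iter n (bshift u) x).
  rewrite eB; have [] // := @inlp_mul (fun k => a (k + n)%N / a k) w (C / c) _ _ wl.
    exact: ltW (divr_gt0 C0 c0).
  move=> k; rewrite nKM nKV; apply: ler_pM => //; first by rewrite invr_ge0.
  by rewrite lef_pV2 ?posrE //; exact: lt_le_trans (ac k).
apply: he => //.
have dl : inlp (dif (iter n (bshift u) x) y0) by exact: inlp_dif.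
apply/(lpn_lt (Sm_ge0 dl) e0); rewrite -/E.
have ll : inlp (dif (Tm w) y0) by apply: inlp_dif => //; exact: Tml.
have [_ hS] : inlp (dif (iter n (bshift u) x) y0) /\
   Sm (dif (iter n (bshift u) x) y0) <= (cp * CM) * Sm (dif (Tm w) y0) + (cp * eta) * Sy.
  apply: dom => //; try by rewrite ltW // mulr_gt0.
  move=> k; rewrite /nt /dif eB /mulseq.
  set M := a (k + n)%N / L.
  have -> : a (k + n)%N / a k * w k - y0 k = M * (Tm w k - y0 k) + (M - 1) * y0 k.
    by rewrite /M /Tm /mulseq; field; rewrite L0 a0.
  apply: (le_trans (pw_quasi _ _)).
  rewrite -[cp * CM * _]mulrA -[cp * eta * _]mulrA -mulrDr ler_wpM2l ?(ltW cp0) //.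
  rewrite (nKM M) (nKM (M - 1)) !pwM ?nK_ge0 //; apply: lerD.
    apply: ler_wpM2r; first exact: powR_ge0.
    apply: pw_mono => //; rewrite /M nKM nKV ler_wpM2r ?invr_ge0 ?nK_ge0 //.
  apply: ler_wpM2r; first exact: powR_ge0.
  have hm := hM _ (leq_trans nN0 (leq_addl k n)).
  have eta1 : eta <= 1 by rewrite ge_min lexx.
  exact: le_trans (pw_le1 (nK_ge0 _) (le_trans hm eta1)) hm.
have h1 : cp * CM * Sm (dif (Tm w) y0) < E / 4.
  have -> : E / 4 = cp * CM * delta by rewrite /delta; field; rewrite !gt_eqF.
  by rewrite ltr_pM2l // mulr_gt0.
have h2 : cp * eta * Sy <= E / 4.
  have h5 : eta <= E / (4 * cp * (Sy + 1)) by rewrite ge_min lexx orbT.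
  apply: (@le_trans _ _ (cp * (E / (4 * cp * (Sy + 1))) * Sy)).
    by apply: ler_wpM2r => //; apply: ler_wpM2l => //; exact: ltW.
  have -> : cp * (E / (4 * cp * (Sy + 1))) * Sy = E / 4 * (Sy / (Sy + 1)).
    by field; rewrite !gt_eqF // ltr_wpDl.
  apply: ler_piMr; first by rewrite divr_ge0 // ltW.
  by rewrite ler_pdivrMr ?ltr_wpDl // mul1r lerDl.
lra.
Qed.


Lemma iter_bshift (w z : nat -> K) n k :
  iter n (bshift w) z k = (\prod_(k.+1 <= i < (k + n).+1) w i) * z (k + n)%N.
Proof.
elim: n k => [|n IH] k /=; first by rewrite addn0 big_geq // mul1r.
rewrite /bshift IH [in RHS]big_ltn; last by lia.
by rewrite mulrA addSnnS.
Qed.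

Lemma wprod_split (w : nat -> K) k n :
  wprod w (k + n)%N = wprod w k * \prod_(k.+1 <= i < (k + n).+1) w i.
Proof. by rewrite /wprod -big_cat_nat //; lia. Qed.

Lemma prod_neq0 (w : nat -> K) m l : (forall n, (0 < n)%N -> w n != 0) -> (0 < m)%N ->
  \prod_(m <= i < l) w i != 0.
Proof.
move=> w0 m0; rewrite prodf_seq_neq0; apply/allP => i; rewrite mem_index_iota.
move=> /andP[hi _]; apply/implyP => _; apply: w0; lia.
Qed.

Lemma fin_bounds (f : nat -> R) N : (forall k, 0 < f k) ->
  exists2 c, 0 < c & exists C, forall k, (k < N)%N -> c <= f k <= C.
Proof.
move=> f0; elim: N => [|N [c c0 [C hC]]]; first by exists 1 => //; exists 0.
exists (Num.min c (f N)); first by rewrite lt_min c0 f0.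
exists (Num.max C (f N)) => k; rewrite ltnS leq_eqVlt => /predU1P[->|kN].
  by rewrite ge_min le_max !lexx !orbT.
have /andP[h1 h2] := hC k kN.
by rewrite ge_min le_max h1 h2.
Qed.

Lemma lim_unif (a : nat -> K) L : (fun n => nK (a n - L)) @ \oo --> (0 : R) ->
  forall eps, 0 < eps -> exists N, forall m, (N <= m)%N -> nK (a m - L) <= eps.
Proof.
move=> /cvgr0Pnorm_le h eps e0; have [N _ HN] := h eps e0.
exists N => m mN; have := HN m mN; rewrite ger0_norm //.
Qed.

Lemma stmt : prop6p9_statement nK p.
Proof.
move=> u v [_ u0] [_ v0] _ _ [L L0 hL] x.
set a := fun n => wprod u n / wprod v n.
have Wu k : wprod u k != 0 by apply: prod_neq0.
have Wv k : wprod v k != 0 by apply: prod_neq0.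
have a0 k : a k != 0 by rewrite mulf_neq0 // invr_eq0.
have hlim := lim_unif hL.
have nL0 : 0 < nK L by exact: nK_gt0.
have [N hN] := hlim (nK L / 2) (divr_gt0 nL0 (ltr0n R 2)).
have [c1 c10 [C1 hC1]] := @fin_bounds (fun k => nK (a k)) N (fun k => nK_gt0 (a0 k)).
set c := Num.min c1 (nK L / 2); set C := Num.max C1 (nK L * 3 / 2).
have c0 : 0 < c by rewrite lt_min c10 divr_gt0.
have hb k : c <= nK (a k) <= C.
  have [kN|kN] := ltnP k N.
    by have /andP[h1 h2] := hC1 k kN; rewrite ge_min le_max h1 h2.
  have h := hN k kN.
  have h1 : nK (a k) <= nK (a k - L) + nK L by rewrite -{1}(subrK L (a k)) nKD.
  have h2 : nK L <= nK (a k - L) + nK (a k).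
    have -> : nK (a k - L) = nK (L - a k) by rewrite -nKN opprB.
    by have := nKD (L - a k) (a k); rewrite subrK.
  apply/andP; split; first by rewrite ge_min; apply/orP; right; lra.
  by rewrite le_max; apply/orP; right; lra.
have ac k : c <= nK (a k) by case/andP: (hb k).
have aC k : nK (a k) <= C by case/andP: (hb k).
have hrel z k n : iter n (bshift u) z k = a (k + n)%N / a k * iter n (bshift v) z k.
  rewrite !iter_bshift /a !wprod_split.
  have Pv : \prod_(k.+1 <= i < (k + n).+1) v i != 0 by apply: prod_neq0.
  by field; rewrite Pv Wu Wv.
split; last exact: (core L0 c0 a0 ac aC hlim hrel).
have C0 : 0 < C by apply: lt_le_trans c0 (le_trans (ac 0%N) (aC 0%N)).
apply: (@core v u (fun k => (a k)^-1) L^-1 C^-1 c^-1).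
- by rewrite invr_eq0.
- by rewrite invr_gt0.
- by move=> k; rewrite invr_eq0.
- by move=> k; rewrite nKV lef_pV2 ?posrE // (lt_le_trans c0).
- by move=> k; rewrite nKV lef_pV2 ?posrE // (lt_le_trans c0).
- move=> eps e0; have [M hM] := hlim (eps * (c * nK L)) (mulr_gt0 e0 (mulr_gt0 c0 nL0)).
  exists M => m mM.
  have -> : (a m)^-1 - L^-1 = (a m - L) * (- (a m)^-1 * L^-1) by field; rewrite L0 a0.
  rewrite nKM nKM nKN !nKV -invfM ler_pdivrMr; last by rewrite mulr_gt0 // nK_gt0.
  apply: le_trans (hM m mM) _; apply: ler_wpM2l; first exact: ltW.
  by apply: ler_wpM2r => //; exact: ltW.
- move=> z k n; rewrite hrel; field; rewrite !a0 //.
Qed.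

End Gen.

Theorem proposition6p9 (R : realType) (p : R) (hp : 1 <= p) :
  prop6p9_statement (modR (R:=R)) p /\
  prop6p9_statement (@modC R) p.
Proof.
split.
  apply: (stmt hp); rewrite /modR.
  - by move=> a; exact: normr_ge0.
  - by move=> a b; exact: ler_normD.
  - by move=> a b; exact: normrM.
  - by move=> a a0; rewrite normr_gt0.
  - by move=> a; exact: normrN.
  - exact: normr1.
  - exact: normr0.
apply: (stmt hp); rewrite /modC.
- by move=> [a b]; rewrite /ComplexField.Normc.normc sqrtr_ge0.
- by move=> a b; exact: le_normcD.
- by move=> a b; exact: ComplexField.Normc.normcM.
- move=> a a0; rewrite lt_neqAle eq_sym; apply/andP; split.
    by apply/eqP => /ComplexField.Normc.eq0_normc h; rewrite h eqxx in a0.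
  by case: a {a0} => x y; rewrite /ComplexField.Normc.normc sqrtr_ge0.
- by move=> a; exact: normcN.
- exact: ComplexField.Normc.normc1.
- exact: ComplexField.Normc.normc0.
Qed.
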